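(* Let $n\in\mathbb{N}$, $p_1,\ldots,p_n\in\mathbb{H}$ with $p_n\neq0$, $d_0\in\{0,1\}$, and $p(x)=p_nx^n+\cdots+p_1x+d_0$. For a real variable $t$, write $p(t)=g(t)\big(g_1(t)+g_2(t)\mathbf{j}\big)$ with $g,g_1,g_2\in\mathbb{C}[t]$ and $\gcd(g_1,g_2)=1$, and let $\tilde g(t)=g_1(t)\bar g_1(t)+g_2(t)\bar g_2(t)$, where $\bar h$ denotes the polynomial obtained from $h\in\mathbb{C}[t]$ by conjugating its coefficients. Write the set of distinct complex roots of $g$ as $$\{\xi_1,\ldots,\xi_s;\ \lambda_1,\overline{\lambda_1},\ldots,\lambda_t,\overline{\lambda_t};\ \eta_1,\ldots,\eta_{k_1}\},$$ where $\xi_1,\ldots,\xi_s$ are real, the $\lambda_i,\overline{\lambda_i}$ are the nonreal roots of $g$ whose conjugates are also roots of $g$, and $\eta_1,\ldots,\eta_{k_1}$ are the remaining (nonreal) roots of $g$. Write the set of distinct complex roots of $\tilde g$ as $\{\eta_{k_1+1},\overline{\eta_{k_1+1}},\ldots,\eta_k,\overline{\eta_k}\}$, where from this list one deletes each pair $\eta_i,\overline{\eta_i}$ for which $\eta_i$ or $\overline{\eta_i}$ is a root of $g$ (so that after deletion $\eta_1,\ldots,\eta_k,\overline{\eta_{k_1+1}},\ldots,\overline{\eta_k},\lambda_1,\overline{\lambda_1},\ldots,\lambda_t,\overline{\lambda_t}$ are distinct nonreal complex numbers). Then the set of zeros of $p(x)$ in $\mathbb{H}$ is $$\{\xi_1,\ldots,\xi_s;\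 \omega_1,\ldots,\omega_k\}\ \dot\cup\ \dot{\bigcup_{i=1}^{t}}[\lambda_i],$$ where $$\omega_i=\frac{1}{|g_1(\overline{\eta_i})|^2+|g_2(\overline{\eta_i})|^2}\Big\{|g_2(\overline{\eta_i})|^2\overline{\eta_i}+|g_1(\overline{\eta_i})|^2\eta_i+2g_2(\overline{\eta_i})\overline{g_1(\overline{\eta_i})}(\operatorname{Im}\eta_i)\mathbf{k}\Big\}.$$
   Context: $\mathbb{H}$ denotes the real quaternions with units $\mathbf{i},\mathbf{j},\mathbf{k}$ ($\mathbf{i}^2=\mathbf{j}^2=\mathbf{k}^2=-1$, $\mathbf{ij}=-\mathbf{ji}=\mathbf{k}$), and $\mathbb{C}=\mathbb{R}\oplus\mathbb{R}\mathbf{i}\subset\mathbb{H}$. Evaluating $p$ at a real $t$ and writing each coefficient $p_i=a_i+b_i\mathbf{j}$ ($a_i,b_i\in\mathbb{C}$) gives $p(t)=f_1(t)+f_2(t)\mathbf{j}$ with $f_1,f_2\in\mathbb{C}[t]$; the factorization $p(t)=g(t)(g_1(t)+g_2(t)\mathbf{j})$ means $f_1=gg_1$, $f_2=gg_2$. For $q\in\mathbb{H}$, $[q]=\{aqa^{-1}:a\in\mathbb{H},a\neq0\}$. $|z|$ and $\operatorname{Im}z$ denote modulus and imaginary part of $z\in\mathbb{C}$. *)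

(* Defs.v *)
From HB Require Import structures.
From mathcomp Require Import all_boot all_order all_algebra.
From mathcomp Require Import Rstruct complex.
From Stdlib Require Rdefinitions.
Set Implicit Arguments. Unset Strict Implicit. Unset Printing Implicit Defensive.
Import Order.TTheory GRing.Theory Num.Theory.
Local Open Scope ring_scope.

Notation R := Rdefinitions.R.
Notation C := (R[i]).

Record quat := Quat { q0 : R; q1 : R; q2 : R; q3 : R }.

Definition qzero : quat := Quat 0 0 0 0.
Definition qone : quat := Quat 1 0 0 0.
Definition qI : quat := Quat 0 1 0 0.
Definition qJ : quat := Quat 0 0 1 0.
Definition qK : quat := Quat 0 0 0 1.
Definition qadd (x y : quat) : quat :=
  Quat (q0 x + q0 y) (q1 x + q1 y) (q2 x + q2 y) (q3 x + q3 y).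
(* Hamilton product, with i^2 = j^2 = k^2 = -1, ij = -ji = k. *)
Definition qmul (x y : quat) : quat :=
  Quat (q0 x * q0 y - q1 x * q1 y - q2 x * q2 y - q3 x * q3 y)
       (q0 x * q1 y + q1 x * q0 y + q2 x * q3 y - q3 x * q2 y)
       (q0 x * q2 y - q1 x * q3 y + q2 x * q0 y + q3 x * q1 y)
       (q0 x * q3 y + q1 x * q2 y - q2 x * q1 y + q3 x * q0 y).
Definition qnorm2 (x : quat) : R := q0 x ^+ 2 + q1 x ^+ 2 + q2 x ^+ 2 + q3 x ^+ 2.
Definition qinv (x : quat) : quat :=
  let n := qnorm2 x in Quat (q0 x / n) (- q1 x / n) (- q2 x / n) (- q3 x / n).
Fixpoint qpow (x : quat) (m : nat) : quat :=
  if m is m'.+1 then qmul (qpow x m') x else qone.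

Definition qofR (r : R) : quat := Quat r 0 0 0.
Definition qofC (z : C) : quat := Quat (complex.Re z) (complex.Im z) 0 0.

(* [q] = { a q a^-1 : a in H, a <> 0 } *)
Definition qsimilar (q x : quat) : Prop :=
  exists a : quat, a <> qzero /\ x = qmul (qmul a q) (qinv a).

(* Decomposition q = a + b j with a, b in C:
   q0 + q1 i + q2 j + q3 k = (q0 + q1 i) + (q2 + q3 i) j. *)
Definition qa (q : quat) : C := Complex (q0 q) (q1 q).
Definition qb (q : quat) : C := Complex (q2 q) (q3 q).

(* p(x) = p_n x^n + ... + p_1 x + d0 (coefficients on the left) *)
Definition qpoly_eval (n : nat) (p : nat -> quat) (d0 : R) (x : quat) : quat :=
  foldr qadd (qofR d0) [seq qmul (p i) (qpow x i) | i <- iota 1 n].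

(* p(t) = f1(t) + f2(t) j for real t *)
Definition f1 (n : nat) (p : nat -> quat) (d0 : R) : {poly C} :=
  (d0%:C)%C%:P + \sum_(1 <= i < n.+1) (qa (p i))%:P * 'X^i.
Definition f2 (n : nat) (p : nat -> quat) : {poly C} :=
  \sum_(1 <= i < n.+1) (qb (p i))%:P * 'X^i.

Definition conjp (h : {poly C}) : {poly C} := map_poly (fun z : C => z^*) h.

Definition gtilde (g1 g2 : {poly C}) : {poly C} := g1 * conjp g1 + g2 * conjp g2.

Definition omega (g1 g2 : {poly C}) (eta : C) : quat :=
  let u := g1.[eta^*] in let v := g2.[eta^*] in
  qmul (qofC ((`|u| ^+ 2 + `|v| ^+ 2)^-1))
    (qadd (qadd (qofC (`|v| ^+ 2 * eta^*)) (qofC (`|u| ^+ 2 * eta)))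
          (qmul (qofC (2 * v * u^* * 'Im eta)) qK)).

(* Main.v *)
Require Import Defs.
From HB Require Import structures.
From mathcomp Require Import all_boot all_order all_algebra.
From mathcomp Require Import Rstruct complex.
From mathcomp Require Import ring lra.
From Stdlib Require Rdefinitions.
Import Order.TTheory GRing.Theory Num.Theory.
Local Open Scope ring_scope.

Lemma cjE (a b : R) : (a +i* b)%C^* = (a +i* (-b))%C.
Proof. reflexivity. Qed.
Lemma cjM (x y : C) : (x * y)^* = x^* * y^*.
Proof. by rewrite rmorphM. Qed.
Lemma cjD (x y : C) : (x + y)^* = x^* + y^*.
Proof. by rewrite rmorphD. Qed.
Lemma cjB (x y : C) : (x - y)^* = x^* - y^*.
Proof. by rewrite rmorphB. Qed.
Lemma cjK (x : C) : x^*^* = x.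
Proof. by case: x => a b; rewrite !cjE opprK. Qed.
Lemma cjR (a : R) : (a%:C)%C^* = (a%:C)%C.
Proof. by rewrite /= cjE oppr0. Qed.

Lemma qa_add x y : qa (qadd x y) = qa x + qa y.
Proof. by []. Qed.
Lemma qb_add x y : qb (qadd x y) = qb x + qb y.
Proof. by []. Qed.

Lemma qa_mul x y : qa (qmul x y) = qa x * qa y - qb x * (qb y)^*.
Proof.
case: x => x0 x1 x2 x3; case: y => y0 y1 y2 y3.
rewrite /qa /qb /qmul /= cjE; simpc; congr Complex; ring.
Qed.
Lemma qb_mul x y : qb (qmul x y) = qa x * qb y + qb x * (qa y)^*.
Proof.
case: x => x0 x1 x2 x3; case: y => y0 y1 y2 y3.
rewrite /qa /qb /qmul /= cjE; simpc; congr Complex; ring.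
Qed.

Lemma quat_eq0 x : qa x = 0 -> qb x = 0 -> x = qzero.
Proof.
case: x => x0 x1 x2 x3; rewrite /qa /qb /= => [[-> ->] [-> ->]]. by [].
Qed.
Lemma qa0 : qa qzero = 0. Proof. by []. Qed.
Lemma qb0 : qb qzero = 0. Proof. by []. Qed.

Fixpoint AB (s N : R) (m : nat) : R * R :=
  match m with
  | 0 => (1, 0)
  | m'.+1 => let ab := AB s N m' in (- N * ab.2, ab.1 + s * ab.2)
  end.

Lemma qpow_AB x m :
  qpow x m = let ab := AB (2 * q0 x) (qnorm2 x) m in
    Quat (ab.1 + ab.2 * q0 x) (ab.2 * q1 x) (ab.2 * q2 x) (ab.2 * q3 x).
Proof.
case: x => x0 x1 x2 x3; elim: m => [|m IH] /=.
  by rewrite /qone; congr Quat; ring.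
rewrite IH /qmul /qnorm2 /=; congr Quat; ring.
Qed.

Lemma cpow_AB (z : C) m :
  z ^+ m = let ab := AB (2 * complex.Re z) (complex.Re z ^+ 2 + complex.Im z ^+ 2) m in
    (ab.1%:C + ab.2%:C * z)%C.
Proof.
case: z => a b; elim: m => [|m IH] /=.
  by rewrite expr0 /= mul0r addr0.
rewrite exprSr IH /=; simpc; congr Complex; ring.
Qed.

Section Eval.
Variables (p : nat -> quat) (s N : R).
Definition Ai i := (AB s N i).1.
Definition Bi i := (AB s N i).2.
Definition SA (l : seq nat) (f : quat -> C) := \sum_(i <- l) (Ai i)%:C%C * f (p i).
Definition SB (l : seq nat) (f : quat -> C) := \sum_(i <- l) (Bi i)%:C%C * f (p i).

Lemma eval_pair (d0 : R) x l : 2 * q0 x = s -> qnorm2 x = N ->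
  qa (foldr qadd (qofR d0) [seq qmul (p i) (qpow x i) | i <- l]) =
    ((d0%:C)%C + SA l qa) + SB l qa * qa x - SB l qb * (qb x)^* /\
  qb (foldr qadd (qofR d0) [seq qmul (p i) (qpow x i) | i <- l]) =
    SA l qb + SB l qa * qb x + SB l qb * (qa x)^*.
Proof.
move=> hs hN; rewrite /SA /SB; elim: l => [|i l [IH1 IH2]] /=.
  rewrite !big_nil !mul0r !addr0 subr0; split; first by rewrite /qa /= complexr0.
  by [].
rewrite !big_cons qa_add qb_add qa_mul qb_mul IH1 IH2 qpow_AB /= hs hN.
have -> : qa (Quat ((AB s N i).1 + (AB s N i).2 * q0 x) ((AB s N i).2 * q1 x)
            ((AB s N i).2 * q2 x) ((AB s N i).2 * q3 x))
          = (Ai i)%:C%C + (Bi i)%:C%C * qa x.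
  by rewrite /qa /Ai /Bi; simpc; congr Complex; ring.
have -> : qb (Quat ((AB s N i).1 + (AB s N i).2 * q0 x) ((AB s N i).2 * q1 x)
            ((AB s N i).2 * q2 x) ((AB s N i).2 * q3 x))
          = (Bi i)%:C%C * qb x.
  by rewrite /qb /Bi; simpc; congr Complex; ring.
rewrite cjD !cjM !cjR.
split; ring.
Qed.

Lemma poly_lin (c : C) (f : quat -> C) (y : C) l :
  2 * complex.Re y = s -> complex.Re y ^+ 2 + complex.Im y ^+ 2 = N ->
  (c%:P + \sum_(i <- l) (f (p i))%:P * 'X^i).[y] = (c + SA l f) + SB l f * y.
Proof.
move=> hs hN; rewrite /SA /SB hornerD hornerC horner_sum.
elim: l => [|i l IH] /=; first by rewrite !big_nil; ring.
rewrite !big_cons hornerCM hornerXn cpow_AB /= hs hN -/(Ai i) -/(Bi i).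
move: IH; rewrite -!addrA => /addrI IH.
rewrite IH; ring.
Qed.
End Eval.

Lemma class_alpha n p d0 x (z : C) :
  q0 x = complex.Re z -> qnorm2 x = complex.Re z ^+ 2 + complex.Im z ^+ 2 ->
  exists al0 al1 be0 be1 : C,
  (qa (qpoly_eval n p d0 x) = al0 + al1 * qa x - be1 * (qb x)^* /\
      qb (qpoly_eval n p d0 x) = be0 + al1 * qb x + be1 * (qa x)^*) /\
  [/\  (f1 n p d0).[z] = al0 + al1 * z, (f1 n p d0).[z^*] = al0 + al1 * z^*,
      (f2 n p).[z] = be0 + be1 * z & (f2 n p).[z^*] = be0 + be1 * z^*].
Proof.
move=> h0 hN.
have hs : 2 * q0 x = 2 * q0 x by [].
have hl : iota 1 n = index_iota 1 n.+1 by rewrite /index_iota subSS subn0.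
have [e1 e2] := eval_pair p (2 * q0 x) (qnorm2 x) d0 x (index_iota 1 n.+1) hs (erefl (qnorm2 x)).
have hz1 : 2 * complex.Re z = 2 * q0 x by rewrite h0.
have hz2 : complex.Re z ^+ 2 + complex.Im z ^+ 2 = qnorm2 x by rewrite hN.
have hc1 : 2 * complex.Re z^* = 2 * q0 x by rewrite h0; case: (z).
have hc2 : complex.Re z^* ^+ 2 + complex.Im z^* ^+ 2 = qnorm2 x.
  by rewrite hN; case: (z) => a b /=; rewrite sqrrN.
exists ((d0%:C)%C + SA p (2 * q0 x) (qnorm2 x) (index_iota 1 n.+1) qa),
  (SB p (2 * q0 x) (qnorm2 x) (index_iota 1 n.+1) qa),
  (SA p (2 * q0 x) (qnorm2 x) (index_iota 1 n.+1) qb),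
  (SB p (2 * q0 x) (qnorm2 x) (index_iota 1 n.+1) qb).
rewrite /qpoly_eval hl e1 e2 /f1 /f2 !(poly_lin p (2 * q0 x) (qnorm2 x)) //.
rewrite -[\sum_(_ <= i < n.+1) _](add0r) !(poly_lin p (2 * q0 x) (qnorm2 x)) // !add0r.
by split.
Qed.

Lemma class_identity (F : comRingType) (al0 al1 be0 be1 ch chs ps pss z zs ga de : F) :
  z = ch - ga + de -> zs = ch - ga - de -> chs = ch - 2%:R * ga ->
  2%:R * de * (al0 + al1 * ch - be1 * pss) =
   (al0 + al1 * z) * (de + ga) + (al0 + al1 * zs) * (de - ga)
     - ((be0 + be1 * z) - (be0 + be1 * zs)) * pss /\
  2%:R * de * (be0 + al1 * ps + be1 * chs) =
   (be0 + be1 * z) * (de - ga) + (be0 + be1 * zs) * (de + ga)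
     + ((al0 + al1 * z) - (al0 + al1 * zs)) * ps.
Proof. by move=> -> -> ->; split; ring. Qed.

Lemma kernel_lemma (F : fieldType) (de ga P Ps w1 w2 u v G G' : F) :
  de * de - ga * ga + Ps * P = 0 -> de != 0 -> (2%:R : F) != 0 ->
  G != 0 -> G' != 0 ->
  G * ((de + ga) * w1 - w2 * Ps) + G' * ((de - ga) * u + v * Ps) = 0 ->
  G * ((de - ga) * w2 + w1 * P) + G' * ((de + ga) * v - u * P) = 0 ->
  [/\ (de + ga) * w1 - w2 * Ps = 0, (de - ga) * w2 + w1 * P = 0,
      (de - ga) * u + v * Ps = 0 & (de + ga) * v - u * P = 0].
Proof.
set A := (de + ga) * w1 - w2 * Ps; set C := (de - ga) * w2 + w1 * P.
set B := (de - ga) * u + v * Ps; set E := (de + ga) * v - u * P.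
move=> hK hde h2 hG hG' e1 e2.
have K' : Ps * P = ga * ga - de * de.
  by apply/eqP; rewrite -subr_eq0; rewrite -hK; apply/eqP; ring.
have h1 : (de - ga) * A + Ps * C = 0.
  rewrite /A /C; have -> : (de - ga) * ((de + ga) * w1 - w2 * Ps) + Ps * ((de - ga) * w2 + w1 * P)
     = (de * de - ga * ga + Ps * P) * w1 by ring.
  by rewrite hK mul0r.
have h2' : - P * A + (de + ga) * C = 0.
  rewrite /A /C; have -> : - P * ((de + ga) * w1 - w2 * Ps) + (de + ga) * ((de - ga) * w2 + w1 * P)
     = (de * de - ga * ga + Ps * P) * w2 by ring.
  by rewrite hK mul0r.
have h3 : (de + ga) * B - Ps * E = 0.
  rewrite /B /E; have -> : (de + ga) * ((de - ga) * u + v * Ps) - Ps * ((de + ga) * v - u * P)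
     = (de * de - ga * ga + Ps * P) * u by ring.
  by rewrite hK mul0r.
have h4 : P * B + (de - ga) * E = 0.
  rewrite /B /E; have -> : P * ((de - ga) * u + v * Ps) + (de - ga) * ((de + ga) * v - u * P)
     = (de * de - ga * ga + Ps * P) * v by ring.
  by rewrite hK mul0r.
have k1 : (de - ga) * B + Ps * E = 0.
  have : G' * ((de - ga) * B + Ps * E) = 0.
    have -> : G' * ((de - ga) * B + Ps * E) =
      (de - ga) * (G * A + G' * B) + Ps * (G * C + G' * E) - G * ((de - ga) * A + Ps * C) by rewrite /A /B /C /E; ring.
    by rewrite e1 e2 h1; ring.
  by move/eqP; rewrite mulf_eq0 (negbTE hG') /= => /eqP.
have k2 : - P * B + (de + ga) * E = 0.
  have : G' * (- P * B + (de + ga) * E) = 0.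
    have -> : G' * (- P * B + (de + ga) * E) =
      - P * (G * A + G' * B) + (de + ga) * (G * C + G' * E) - G * (- P * A + (de + ga) * C) by rewrite /A /B /C /E; ring.
    by rewrite e1 e2 h2'; ring.
  by move/eqP; rewrite mulf_eq0 (negbTE hG') /= => /eqP.
have hB : B = 0.
  have : (2%:R * de) * B = 0.
    have -> : 2%:R * de * B = ((de - ga) * B + Ps * E) + ((de + ga) * B - Ps * E) by rewrite /B /E; ring.
    by rewrite k1 h3 addr0.
  by move/eqP; rewrite !mulf_eq0 (negbTE h2) (negbTE hde) /= => /eqP.
have hE : E = 0.
  have : (2%:R * de) * E = 0.
    have -> : 2%:R * de * E = (- P * B + (de + ga) * E) + (P * B + (de - ga) * E) by rewrite /B /E; ring.
    by rewrite k2 h4 addr0.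
  by move/eqP; rewrite !mulf_eq0 (negbTE h2) (negbTE hde) /= => /eqP.
have hA : A = 0.
  by move: e1; rewrite hB mulr0 addr0 => /eqP; rewrite mulf_eq0 (negbTE hG) /= => /eqP.
have hC : C = 0.
  by move: e2; rewrite hE mulr0 addr0 => /eqP; rewrite mulf_eq0 (negbTE hG) /= => /eqP.
by split.
Qed.

Lemma sqnorm_C (a b : R) : `|(a +i* b)%C| ^+ 2 = ((a ^+ 2 + b ^+ 2)%:C)%C.
Proof. by rewrite -add_Re2_Im2. Qed.

Lemma omega_comp (g1 g2 : {poly C}) (a b u1 u2 v1 v2 : R) :
  g1.[(a +i* b)%C^*] = (u1 +i* u2)%C -> g2.[(a +i* b)%C^*] = (v1 +i* v2)%C ->
  u1 ^+ 2 + u2 ^+ 2 + (v1 ^+ 2 + v2 ^+ 2) != 0 ->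
  omega g1 g2 (a +i* b)%C =
  let D := u1 ^+ 2 + u2 ^+ 2 + (v1 ^+ 2 + v2 ^+ 2) in
  Quat a (b * (u1 ^+ 2 + u2 ^+ 2 - (v1 ^+ 2 + v2 ^+ 2)) / D)
       (- (2 * b * (v2 * u1 - v1 * u2)) / D) (2 * b * (v1 * u1 + v2 * u2) / D).
Proof.
move=> h1 h2 hD; rewrite /omega h1 h2 !sqnorm_C -complexIm.
rewrite -!complexr0 cjE /=.
rewrite /qofC /qmul /qadd /qK /=.
simpc.
have hD2 : (u1 ^+ 2 + u2 ^+ 2 + (v1 ^+ 2 + v2 ^+ 2)) ^+ 2 + 0 ^+ 2 != 0.
  by rewrite expr0n /= addr0 sqrf_eq0.
congr Quat; field; by rewrite ?hD ?hD2.
Qed.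

Lemma cplx0 (x y : R) : (x +i* y)%C = 0 -> x = 0 /\ y = 0.
Proof. by case. Qed.

Section Solve.
Variables (b c p2 p3 u1 u2 v1 v2 : R).
Definition eB1 := - ((b - c) * u2) + v1 * p2 + v2 * p3.
Definition eB2 := (b - c) * u1 + v2 * p2 - v1 * p3.
Definition eE1 := - ((b + c) * v2) - u1 * p2 + u2 * p3.
Definition eE2 := (b + c) * v1 - u1 * p3 - u2 * p2.

Lemma B_comp :
  ((b%:C * 'i - c%:C * 'i) * (u1 +i* u2) + (v1 +i* v2) * (p2 +i* p3)^*)%C = 0 ->
  eB1 = 0 /\ eB2 = 0.
Proof.
rewrite cjE -!complexr0; simpc => /cplx0 [h1 h2].
by split; [move: h1 => <-; rewrite /eB1 | move: h2 => <-; rewrite /eB2]; ring.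
Qed.

Lemma E_comp :
  ((b%:C * 'i + c%:C * 'i) * (v1 +i* v2) - (u1 +i* u2) * (p2 +i* p3))%C = 0 ->
  eE1 = 0 /\ eE2 = 0.
Proof.
rewrite -!complexr0; simpc => /cplx0 [h1 h2].
by split; [move: h1 => <-; rewrite /eE1 | move: h2 => <-; rewrite /eE2]; ring.
Qed.

Lemma solve_real : let D := u1 ^+ 2 + u2 ^+ 2 + (v1 ^+ 2 + v2 ^+ 2) in
  D != 0 -> eB1 = 0 -> eB2 = 0 -> eE1 = 0 -> eE2 = 0 ->
  [/\ c = b * (u1 ^+ 2 + u2 ^+ 2 - (v1 ^+ 2 + v2 ^+ 2)) / D,
      p2 = - (2 * b * (v2 * u1 - v1 * u2)) / D &
      p3 = 2 * b * (v1 * u1 + v2 * u2) / D].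
Proof.
move=> D hD h1 h2 h3 h4.
split; apply: (mulIf hD); rewrite divfK //; apply/eqP; rewrite -subr_eq0 /D.
- have -> : c * (u1 ^+ 2 + u2 ^+ 2 + (v1 ^+ 2 + v2 ^+ 2)) - b * (u1 ^+ 2 + u2 ^+ 2 - (v1 ^+ 2 + v2 ^+ 2))
    = u2 * eB1 - u1 * eB2 - v2 * eE1 + v1 * eE2 by rewrite /eB1 /eB2 /eE1 /eE2; ring.
  by rewrite h1 h2 h3 h4; apply/eqP; ring.
- have -> : p2 * (u1 ^+ 2 + u2 ^+ 2 + (v1 ^+ 2 + v2 ^+ 2)) - - (2 * b * (v2 * u1 - v1 * u2))
    = eB1 * v1 + eB2 * v2 - eE1 * u1 - eE2 * u2 by rewrite /eB1 /eB2 /eE1 /eE2; ring.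
  by rewrite h1 h2 h3 h4; apply/eqP; ring.
- have -> : p3 * (u1 ^+ 2 + u2 ^+ 2 + (v1 ^+ 2 + v2 ^+ 2)) - 2 * b * (v1 * u1 + v2 * u2)
    = eB1 * v2 - eB2 * v1 - eE2 * u1 + eE1 * u2 by rewrite /eB1 /eB2 /eE1 /eE2; ring.
  by rewrite h1 h2 h3 h4; apply/eqP; ring.
Qed.
End Solve.

Section Sat.
Variables (b u1 u2 v1 v2 r1 s1 r2 s2 : R).
Let D := u1 ^+ 2 + u2 ^+ 2 + (v1 ^+ 2 + v2 ^+ 2).
Let c := b * (u1 ^+ 2 + u2 ^+ 2 - (v1 ^+ 2 + v2 ^+ 2)) / D.
Let p2 := - (2 * b * (v2 * u1 - v1 * u2)) / D.
Let p3 := 2 * b * (v1 * u1 + v2 * u2) / D.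
Hypothesis hD : D != 0.

Lemma sat_B :
  ((b%:C * 'i - c%:C * 'i) * (u1 +i* u2) + (v1 +i* v2) * (p2 +i* p3)^*)%C = 0.
Proof.
rewrite cjE -!complexr0; simpc; rewrite /c /p2 /p3; apply/eqP; rewrite eq_complex /=.
by apply/andP; split; apply/eqP; rewrite /D; field.
Qed.

Lemma sat_E :
  ((b%:C * 'i + c%:C * 'i) * (v1 +i* v2) - (u1 +i* u2) * (p2 +i* p3))%C = 0.
Proof.
rewrite -!complexr0; simpc; rewrite /c /p2 /p3; apply/eqP; rewrite eq_complex /=.
by apply/andP; split; apply/eqP; rewrite /D; field.
Qed.

Lemma sat_A :
  (((b%:C * 'i + c%:C * 'i) * (r1 +i* s1) - (r2 +i* s2) * (p2 +i* p3)^*) * D%:C =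
   (2 * b)%:C * 'i * (u1 +i* u2) *
     ((r1 +i* s1) * (u1 +i* u2)^* + (r2 +i* s2) * (v1 +i* v2)^*))%C.
Proof.
rewrite !cjE -!complexr0; simpc; rewrite /c /p2 /p3; by congr Complex; rewrite /D; field.
Qed.

Lemma sat_C :
  (((b%:C * 'i - c%:C * 'i) * (r2 +i* s2) + (r1 +i* s1) * (p2 +i* p3)) * D%:C =
   (2 * b)%:C * 'i * (v1 +i* v2) *
     ((r1 +i* s1) * (u1 +i* u2)^* + (r2 +i* s2) * (v1 +i* v2)^*))%C.
Proof.
rewrite !cjE -!complexr0; simpc; rewrite /c /p2 /p3; by congr Complex; rewrite /D; field.
Qed.

Lemma sat_norm : c ^+ 2 + p2 ^+ 2 + p3 ^+ 2 = b ^+ 2.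
Proof. by rewrite /c /p2 /p3 /D; field. Qed.
End Sat.

Lemma qnorm2_neq0 a : a <> qzero -> qnorm2 a != 0.
Proof.
case: a => a0 a1 a2 a3 ha; apply/eqP => h; apply: ha; rewrite /qnorm2 /= in h.
have h0 : a0 = 0 by nra.
have h1 : a1 = 0 by nra.
have h2 : a2 = 0 by nra.
have h3 : a3 = 0 by nra.
by rewrite h0 h1 h2 h3.
Qed.

Lemma similar_class lam x : qsimilar (qofC lam) x ->
  q0 x = complex.Re lam /\ q1 x ^+ 2 + q2 x ^+ 2 + q3 x ^+ 2 = complex.Im lam ^+ 2.
Proof.
case=> a [ha ->]; have := @qnorm2_neq0 a ha.
case: a {ha} => a0 a1 a2 a3; case: lam => l0 l1; rewrite /qnorm2 /= => hn.
by split; rewrite /qmul /qinv /qnorm2 /=; field.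
Qed.

Lemma qmulK x a : qnorm2 a != 0 -> qmul (qmul x a) (qinv a) = x.
Proof.
case: a => a0 a1 a2 a3; case: x => x0 x1 x2 x3; rewrite /qnorm2 /= => hn.
by rewrite /qmul /qinv /qnorm2 /=; congr Quat; field.
Qed.

Lemma class_similar lam x : complex.Im lam != 0 ->
  q0 x = complex.Re lam -> q1 x ^+ 2 + q2 x ^+ 2 + q3 x ^+ 2 = complex.Im lam ^+ 2 ->
  qsimilar (qofC lam) x.
Proof.
case: lam => l0 l1; case: x => x0 x1 x2 x3 /= hl -> hN.
case: (boolP [&& l1 + x1 == 0, x2 == 0 & x3 == 0]).
  case/and3P => /eqP h1 /eqP h2 /eqP h3.
  exists qJ; split; first by case=> /eqP; rewrite oner_eq0.
  have e1 : x1 = - l1 by apply/eqP; rewrite -subr_eq0 opprK addrC h1.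
  rewrite e1 h2 h3 /qmul /qinv /qnorm2 /qJ /qofC /=; by congr Quat; field.
move=> hne.
set a := Quat 0 (l1 + x1) x2 x3.
have ha : qnorm2 a != 0.
  apply/eqP => h; move: hne; rewrite /a /qnorm2 /= in h.
  have e1 : l1 + x1 = 0 by nra.
  have e2 : x2 = 0 by nra.
  have e3 : x3 = 0 by nra.
  by rewrite e1 e2 e3 eqxx.
exists a; split.
  by move=> h; move: ha; rewrite h /qnorm2 /= expr0n /= !addr0 eqxx.
have -> : qmul a (qofC (l0 +i* l1)%C) = qmul (Quat l0 x1 x2 x3) a.
  rewrite /a /qmul /qofC /=; congr Quat; nra.
by rewrite qmulK.
Qed.

Lemma main_formula n p d0 (g g1 g2 : {poly C})
  (hf1 : f1 n p d0 = g * g1) (hf2 : f2 n p = g * g2) x (a b : R) :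
  q0 x = a -> q1 x ^+ 2 + q2 x ^+ 2 + q3 x ^+ 2 = b ^+ 2 ->
  let z := (a +i* b)%C in let de := (b%:C * 'i)%C in let ga := ((q1 x)%:C * 'i)%C in
  2%:R * de * qa (qpoly_eval n p d0 x) =
    g.[z] * ((de + ga) * g1.[z] - g2.[z] * (qb x)^*) +
    g.[z^*] * ((de - ga) * g1.[z^*] + g2.[z^*] * (qb x)^*) /\
  2%:R * de * qb (qpoly_eval n p d0 x) =
    g.[z] * ((de - ga) * g2.[z] + g1.[z] * qb x) +
    g.[z^*] * ((de + ga) * g2.[z^*] - g1.[z^*] * qb x).
Proof.
move=> h0 hN z de ga.
have hN' : qnorm2 x = complex.Re z ^+ 2 + complex.Im z ^+ 2.
  by rewrite /z /= -hN /qnorm2 -h0; ring.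
have [al0 [al1 [be0 [be1 [[e1 e2] [e3 e4 e5 e6]]]]]] :=
  class_alpha n p d0 x z h0 hN'.
have hz : z = qa x - ga + de.
  rewrite /z /ga /de /qa -h0 -!complexr0; simpc; congr Complex; ring.
have hzs : z^* = qa x - ga - de.
  rewrite /z /ga /de /qa cjE -h0 -!complexr0; simpc; congr Complex; ring.
have hchs : (qa x)^* = qa x - 2%:R * ga.
  rewrite /ga /qa cjE -!complexr0; simpc; congr Complex; ring.
have [I1 I2] := @class_identity _ al0 al1 be0 be1 (qa x) ((qa x)^*) (qb x) ((qb x)^*) z (z^*) ga de hz hzs hchs.
rewrite e1 e2 I1 I2 -e3 -e4 -e5 -e6 hf1 hf2 !hornerM.
by split; ring.
Qed.

Lemma conjp_horner (h : {poly C}) (y : C) : (conjp h).[y] = (h.[y^*])^*.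
Proof.
rewrite /conjp -{1}(cjK y).
have -> : (fun z : C => z^*) = (Num.conj : C -> C) by [].
by rewrite horner_map.
Qed.

Lemma gtilde_horner (g1 g2 : {poly C}) (y : C) :
  (gtilde g1 g2).[y] = g1.[y] * (g1.[y^*])^* + g2.[y] * (g2.[y^*])^*.
Proof. by rewrite /gtilde hornerD !hornerM !conjp_horner. Qed.

Lemma cop_nz (g1 g2 : {poly C}) (y : C) : coprimep g1 g2 ->
  g1.[y] != 0 \/ g2.[y] != 0.
Proof.
move=> hc; case: (boolP (root g1 y)) => h.
  by right; exact: coprimep_root hc h.
by left.
Qed.

Lemma cnz (u1 u2 : R) : (u1 +i* u2)%C != 0 -> u1 ^+ 2 + u2 ^+ 2 != 0.
Proof.
move=> h; apply/eqP => e; move: h.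
have e1 : u1 = 0 by nra.
have e2 : u2 = 0 by nra.
by rewrite e1 e2 eqxx.
Qed.

Lemma Dnz (u1 u2 v1 v2 : R) : (u1 +i* u2)%C != 0 \/ (v1 +i* v2)%C != 0 ->
  u1 ^+ 2 + u2 ^+ 2 + (v1 ^+ 2 + v2 ^+ 2) != 0.
Proof.
move=> h; apply/eqP => e.
have e1 : u1 = 0 by nra.
have e2 : u2 = 0 by nra.
have e3 : v1 = 0 by nra.
have e4 : v2 = 0 by nra.
by move: h; rewrite e1 e2 e3 e4 eqxx; case.
Qed.

Lemma omega_class (g1 g2 : {poly C}) (a b : R) : coprimep g1 g2 ->
  q0 (omega g1 g2 (a +i* b)%C) = a /\
  q1 (omega g1 g2 (a +i* b)%C) ^+ 2 + q2 (omega g1 g2 (a +i* b)%C) ^+ 2 +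
  q3 (omega g1 g2 (a +i* b)%C) ^+ 2 = b ^+ 2.
Proof.
move=> hc.
have := cop_nz g1 g2 ((a +i* b)%C^*) hc.
case hu : (g1.[(a +i* b)%C^*]) => [u1 u2].
case hv : (g2.[(a +i* b)%C^*]) => [v1 v2].
move=> /Dnz hD.
rewrite (@omega_comp g1 g2 a b u1 u2 v1 v2 hu hv hD) /=; split => //.
by rewrite sat_norm.
Qed.

Lemma qbQ x0 x1 x2 x3 : qb (Quat x0 x1 x2 x3) = (x2 +i* x3)%C.
Proof. by []. Qed.
Lemma qaQ x0 x1 x2 x3 : qa (Quat x0 x1 x2 x3) = (x0 +i* x1)%C.
Proof. by []. Qed.

Lemma two_de_nz (b : R) : b != 0 -> (2%:R * (b%:C * 'i)%C : C) != 0.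
Proof.
move=> hb; rewrite -complexr0; apply/negP; simpc.
rewrite eq_complex /= => /andP [_ /eqP h]; move: hb; rewrite (_ : b = 0) ?eqxx //.
by move: h; rewrite /GRing.natmul /= => h; nra.
Qed.

Lemma omega_zero n p d0 (g g1 g2 : {poly C})
  (hf1 : f1 n p d0 = g * g1) (hf2 : f2 n p = g * g2) (hc : coprimep g1 g2) (a b : R) :
  b != 0 ->
  (g.[(a +i* b)%C] = 0 \/ (gtilde g1 g2).[(a +i* b)%C] = 0) ->
  qpoly_eval n p d0 (omega g1 g2 (a +i* b)%C) = qzero.
Proof.
move=> hb hcase.
have [hq0 hqN] := omega_class g1 g2 a b hc.
have [M1 M2] := @main_formula _ _ _ _ _ _ hf1 hf2 _ _ _ hq0 hqN.
move: hcase M1 M2; rewrite gtilde_horner.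
have := cop_nz g1 g2 ((a +i* b)%C^*) hc.
case hu : (g1.[(a +i* b)%C^*]) => [u1 u2].
case hv : (g2.[(a +i* b)%C^*]) => [v1 v2].
case hw1 : (g1.[(a +i* b)%C]) => [r1 s1].
case hw2 : (g2.[(a +i* b)%C]) => [r2 s2].
move=> /Dnz hD.
rewrite (@omega_comp g1 g2 a b u1 u2 v1 v2 hu hv hD) /= !qbQ.
rewrite (sat_B b u1 u2 v1 v2 hD) (sat_E b u1 u2 v1 v2 hD) !mulr0 !addr0.
have hDC : (((u1 ^+ 2 + u2 ^+ 2 + (v1 ^+ 2 + v2 ^+ 2))%:C)%C : C) != 0.
  by rewrite -complexr0 eq_complex /= negb_and hD.
case=> [hG | hgt] M1 M2; apply: quat_eq0.
- by move: M1; rewrite hG !mul0r => /eqP; rewrite mulf_eq0 (negbTE (two_de_nz b hb)) => /eqP.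
- by move: M2; rewrite hG !mul0r => /eqP; rewrite mulf_eq0 (negbTE (two_de_nz b hb)) => /eqP.
- move: M1; set A := (X in _ = _ * X).
  have -> : A = 0.
    by apply: (mulIf hDC); rewrite /A mul0r (sat_A b u1 u2 v1 v2 r1 s1 r2 s2 hD) hgt mulr0.
  by rewrite mulr0 => /eqP; rewrite mulf_eq0 (negbTE (two_de_nz b hb)) => /eqP.
- move: M2; set A := (X in _ = _ * X).
  have -> : A = 0.
    by apply: (mulIf hDC); rewrite /A mul0r (sat_C b u1 u2 v1 v2 r1 s1 r2 s2 hD) hgt mulr0.
  by rewrite mulr0 => /eqP; rewrite mulf_eq0 (negbTE (two_de_nz b hb)) => /eqP.
Qed.

Lemma solve_to_omega (g1 g2 : {poly C}) (hc : coprimep g1 g2) x (a b : R) :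
  q0 x = a ->
  (b%:C * 'i - (q1 x)%:C * 'i)%C * g1.[(a +i* b)%C^*] + g2.[(a +i* b)%C^*] * (qb x)^* = 0 ->
  (b%:C * 'i + (q1 x)%:C * 'i)%C * g2.[(a +i* b)%C^*] - g1.[(a +i* b)%C^*] * qb x = 0 ->
  x = omega g1 g2 (a +i* b)%C.
Proof.
have := cop_nz g1 g2 ((a +i* b)%C^*) hc.
case hu : (g1.[(a +i* b)%C^*]) => [u1 u2].
case hv : (g2.[(a +i* b)%C^*]) => [v1 v2].
move=> /Dnz hD.
case: x => x0 x1 x2 x3 /= h0; rewrite qbQ => hB hE.
have [e1 e2] := B_comp _ _ _ _ _ _ _ _ hB.
have [e3 e4] := E_comp _ _ _ _ _ _ _ _ hE.
have [-> -> ->] := solve_real _ _ _ _ _ _ _ _ hD e1 e2 e3 e4.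
by rewrite (@omega_comp g1 g2 a b u1 u2 v1 v2 hu hv hD) h0.
Qed.

Lemma real_eval n p d0 (g g1 g2 : {poly C})
  (hf1 : f1 n p d0 = g * g1) (hf2 : f2 n p = g * g2) x :
  q1 x = 0 -> q2 x = 0 -> q3 x = 0 ->
  qa (qpoly_eval n p d0 x) = g.[((q0 x)%:C)%C] * g1.[((q0 x)%:C)%C] /\
  qb (qpoly_eval n p d0 x) = g.[((q0 x)%:C)%C] * g2.[((q0 x)%:C)%C].
Proof.
move=> h1 h2 h3.
have h0 : q0 x = complex.Re ((q0 x)%:C)%C by [].
have hN : qnorm2 x = complex.Re ((q0 x)%:C)%C ^+ 2 + complex.Im ((q0 x)%:C)%C ^+ 2.
  by rewrite /qnorm2 h1 h2 h3 /=; ring.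
have [al0 [al1 [be0 [be1 [[e1 e2] [e3 e4 e5 e6]]]]]] := class_alpha n p d0 x _ h0 hN.
have hqa : qa x = ((q0 x)%:C)%C by rewrite /qa h1.
have hqb : qb x = 0 by rewrite /qb h2 h3.
rewrite e1 e2 hqa hqb -hornerM -hornerM -hf1 -hf2 e3.
rewrite -[X in (f2 n p).[X]]cjR e6 cjR.
by split; ring.
Qed.

Lemma hK_lemma x (b : R) : q1 x ^+ 2 + q2 x ^+ 2 + q3 x ^+ 2 = b ^+ 2 ->
  (b%:C * 'i)%C * (b%:C * 'i)%C - ((q1 x)%:C * 'i)%C * ((q1 x)%:C * 'i)%C
    + (qb x)^* * qb x = 0.
Proof.
case: x => x0 x1 x2 x3 /= h; rewrite qbQ cjE -!complexr0; simpc.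
apply/eqP; rewrite eq_complex /=; apply/andP; split; apply/eqP; nra.
Qed.

Lemma cN (b : R) : ((-b)%:C)%C = - (b%:C)%C :> C.
Proof. by rewrite -!complexr0; simpc. Qed.

Lemma de_nz (b : R) : b != 0 -> (b%:C * 'i)%C != 0 :> C.
Proof.
move=> hb; apply/negP => /eqP h; move: (two_de_nz b hb); rewrite h mulr0 eqxx //.
Qed.

Lemma two_nz : (2%:R : C) != 0.
Proof. by rewrite pnatr_eq0. Qed.

Lemma eq0_2de (b : R) (y : C) : b != 0 -> 2%:R * (b%:C * 'i)%C * y = 0 -> y = 0.
Proof. by move=> hb /eqP; rewrite mulf_eq0 (negbTE (two_de_nz b hb)) => /eqP. Qed.

Theorem theorem4 (n : nat) (p : nat -> quat) (d0 : R)
  (hn : (0 < n)%N) (hpn : p n <> qzero) (hd0 : d0 = 0 \/ d0 = 1)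
  (g g1 g2 : {poly C})
  (hf1 : f1 n p d0 = g * g1) (hf2 : f2 n p = g * g2)
  (hcop : coprimep g1 g2) :
  let finite_part (x : quat) : Prop :=
    (exists xi : R, root g (xi%:C)%C /\ x = qofR xi) \/
    (exists eta : C,
        ((complex.Im eta != 0 /\ root g eta /\ ~~ root g eta^*) \/
         (root (gtilde g1 g2) eta /\ ~~ root g eta /\ ~~ root g eta^*)) /\
        x = omega g1 g2 eta) in
  let classes_part (x : quat) : Prop :=
    exists lam : C, complex.Im lam != 0 /\ root g lam /\ root g lam^* /\
                    qsimilar (qofC lam) x in
  (forall x : quat, qpoly_eval n p d0 x = qzero <-> finite_part x \/ classes_part x)
  /\ (forall x : quat, finite_part x -> ~ classes_part x).
Proof.
move=> fp cp.
have gt_real : forall a : R, (gtilde g1 g2).[(a +i* 0)%C] != 0.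
  move=> a; rewrite gtilde_horner (_ : (a +i* 0)%C^* = (a +i* 0)%C); last first.
    by rewrite cjE oppr0.
  have := cop_nz g1 g2 ((a +i* 0)%C) hcop.
  case: (g1.[_]) => [u1 u2]; case: (g2.[_]) => [v1 v2] /Dnz hD.
  rewrite !cjE; simpc; rewrite eq_complex /= negb_and; apply/orP; left.
  by move: hD; apply: contra => /eqP h; apply/eqP; rewrite -h; ring.
split; last first.
  move=> x hf [lam [hl [r1 [r2 hs]]]].
  have [e0 eN] := @similar_class lam x hs.
  case: hf => [[xi [_ hx]] | [eta [hcase hx]]]; rewrite hx in e0 eN.
    by move: eN hl; rewrite /qofR /= expr0n /= !addr0 => /esym /eqP; rewrite sqrf_eq0 => ->.
  case: eta hcase e0 eN hx => a b hcase.
  have [o0 oN] := omega_class g1 g2 a b hcop.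
  rewrite o0 oN /= => ea eb _.
  have : (b == complex.Im lam) || (b == - complex.Im lam) by rewrite -eqf_sqr eb.
  case: lam hl r1 r2 hs ea eb => l0 l1 /= hl r1 r2 hs ea eb.
  move=> /orP [/eqP eb' | /eqP eb'].
    rewrite ea eb' in hcase; move: hcase r1 r2.
    by case=> [[_ [_ /negP]] | [_ [/negP]]] //.
  rewrite ea eb' in hcase; move: hcase r1 r2; rewrite !cjE opprK.
  by case=> [[_ [_ /negP]] | [_ [/negP]]] //.
move=> x; split.
-
  move=> hP.
  have hPa : qa (qpoly_eval n p d0 x) = 0 by rewrite hP.
  have hPb : qb (qpoly_eval n p d0 x) = 0 by rewrite hP.
  set s := q1 x ^+ 2 + q2 x ^+ 2 + q3 x ^+ 2.
  case: (boolP (s == 0)) => hs.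
  +
    have h1 : q1 x = 0 by move: hs; rewrite /s => /eqP hs; nra.
    have h2 : q2 x = 0 by move: hs; rewrite /s => /eqP hs; nra.
    have h3 : q3 x = 0 by move: hs; rewrite /s => /eqP hs; nra.
    have [ea eb] := @real_eval _ _ _ _ _ _ hf1 hf2 x h1 h2 h3.
    left; left; exists (q0 x); split; last first.
      by clear -h1 h2 h3; case: x h1 h2 h3 => x0 x1 x2 x3 /= -> -> ->.
    rewrite /root; apply/eqP.
    have := cop_nz g1 g2 ((q0 x)%:C)%C hcop.
    move: ea eb; rewrite hPa hPb => /esym/eqP + /esym/eqP.
    rewrite !mulf_eq0 => /orP [/eqP // | h1'] /orP [/eqP // | h2'].
    by rewrite h1' h2' /=; case.
  +
    have hs0 : 0 <= s by rewrite /s; apply: addr_ge0; [apply: addr_ge0|]; apply: sqr_ge0.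
    set b := Num.sqrt s.
    have hb2 : s = b ^+ 2 by rewrite /b sqr_sqrtr.
    have hb : b != 0 by rewrite /b sqrtr_eq0 -ltNge lt_def hs hs0.
    have [M1 M2] := @main_formula _ _ _ _ _ _ hf1 hf2 x (q0 x) b (erefl _) hb2.
    move: M1 M2; rewrite hPa hPb !mulr0 => /esym M1 /esym M2.
    set z := ((q0 x) +i* b)%C in M1 M2 *.
    case: (boolP (g.[z] == 0)) => hG; case: (boolP (g.[z^*] == 0)) => hG'.
    * right; exists z; split; first by [].
      split; first by [].
      split; first by [].
      by apply: class_similar => //=; rewrite -hb2.
    * move: M1 M2; rewrite (eqP hG) !mul0r !add0r => /eqP M1 /eqP M2.
      move: M1 M2; rewrite !mulf_eq0 (negbTE hG') /= => /eqP hB /eqP hE.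
      left; right; exists z; split; last by apply: solve_to_omega.
      by left; split => //; split.
    * move: M1 M2; rewrite (eqP hG') !mul0r !addr0 => /eqP M1 /eqP M2.
      move: M1 M2; rewrite !mulf_eq0 (negbTE hG) /= => /eqP hA /eqP hC.
      left; right; exists z^*; split.
        by left; rewrite cjK; split => //=; rewrite oppr_eq0.
      rewrite /z cjE; apply: solve_to_omega => //.
        rewrite cjE opprK -/z.
        have -> : (((- b)%:C * 'i - (q1 x)%:C * 'i)%C * g1.[z] + g2.[z] * (qb x)^*)
          = - ((b%:C * 'i + (q1 x)%:C * 'i)%C * g1.[z] - g2.[z] * (qb x)^*).
          by rewrite cN; ring.
        by rewrite hA oppr0.
      rewrite cjE opprK -/z.
      have -> : (((- b)%:C * 'i + (q1 x)%:C * 'i)%C * g2.[z] - g1.[z] * qb x)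
        = - ((b%:C * 'i - (q1 x)%:C * 'i)%C * g2.[z] + g1.[z] * qb x).
        by rewrite cN; ring.
      by rewrite hC oppr0.
    * have hK := @hK_lemma x b hb2.
      have [hA hC hB hE] := @kernel_lemma _ _ _ _ _ _ _ _ _ _ _ hK (de_nz b hb) two_nz hG hG' M1 M2.
      have hx : x = omega g1 g2 z by apply: solve_to_omega.
      have hgt : (gtilde g1 g2).[z] = 0.
        move: hA hC; rewrite gtilde_horner.
        have := cop_nz g1 g2 (z^*) hcop.
        rewrite hx /z.
        case hu : (g1.[(q0 x +i* b)%C^*]) => [u1 u2].
        case hv : (g2.[(q0 x +i* b)%C^*]) => [v1 v2].
        case hw1 : (g1.[(q0 x +i* b)%C]) => [r1 s1].
        case hw2 : (g2.[(q0 x +i* b)%C]) => [r2 s2].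
        move=> /Dnz hD.
        rewrite (@omega_comp g1 g2 _ b u1 u2 v1 v2 hu hv hD) /= !qbQ => hA hC.
        have hDC : (((u1 ^+ 2 + u2 ^+ 2 + (v1 ^+ 2 + v2 ^+ 2))%:C)%C : C) != 0.
          by rewrite -complexr0 eq_complex /= negb_and hD.
        have e1 := sat_A b u1 u2 v1 v2 r1 s1 r2 s2 hD.
        have e2 := sat_C b u1 u2 v1 v2 r1 s1 r2 s2 hD.
        rewrite hA mul0r in e1; rewrite hC mul0r in e2.
        have h2b : ((2 * b)%:C * 'i)%C != 0 :> C.
          by rewrite -complexr0; apply/negP; simpc; rewrite eq_complex /= => /andP [_ /eqP h]; move: hb; rewrite (_ : b = 0) ?eqxx //; nra.
        move: e1 e2 => /esym/eqP e1 /esym/eqP e2.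
        rewrite -mulrA mulf_eq0 (negbTE h2b) /= mulf_eq0 in e1.
        rewrite -mulrA mulf_eq0 (negbTE h2b) /= mulf_eq0 in e2.
        case/orP: e1 => [hu0 | /eqP //]; case/orP: e2 => [hv0 | /eqP //].
        move/eqP/cplx0: hu0 => [e3 e4]; move/eqP/cplx0: hv0 => [e5 e6].
        by move: hD; rewrite e3 e4 e5 e6 expr0n /= !addr0 eqxx.
      left; right; exists z; split => //.
      by right; split => //; apply/eqP.
-
  case=> [[[xi [hr hx]] | [eta [hcase hx]]] | [lam [hl [r1 [r2 hs]]]]].
  + have h1 : q1 x = 0 by rewrite hx.
    have h2 : q2 x = 0 by rewrite hx.
    have h3 : q3 x = 0 by rewrite hx.
    have [ea eb] := @real_eval _ _ _ _ _ _ hf1 hf2 x h1 h2 h3.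
    have e0 : q0 x = xi by rewrite hx.
    rewrite e0 in ea eb.
    move: hr; rewrite /root => /eqP hr.
    by apply: quat_eq0; rewrite ?ea ?eb hr mul0r.
  + rewrite hx; clear hx; move: hcase; case: eta => a b.
    case=> [[hb [hr _]] | [hr [hnr _]]].
      by apply: (@omega_zero _ _ _ _ _ _ hf1 hf2 hcop a b hb); left; apply/eqP.
    have hb : b != 0.
      by apply/negP => /eqP hb0; move: hr; rewrite hb0 /root (negbTE (gt_real a)).
    by apply: (@omega_zero _ _ _ _ _ _ hf1 hf2 hcop a b hb); right; apply/eqP.
  + have [e0 eN] := @similar_class lam x hs.
    case: lam hl r1 r2 e0 eN {hs} => l0 l1 /= hl r1 r2 e0 eN.
    have [M1 M2] := @main_formula _ _ _ _ _ _ hf1 hf2 x l0 l1 e0 eN.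
    move: M1 M2; rewrite (eqP r1) (eqP r2) !mul0r !addr0 => M1 M2.
    apply: quat_eq0; [exact: eq0_2de hl M1 | exact: eq0_2de hl M2].
Qed.
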